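(* Let ${\mathbf{w}}\in\mathbb{R}^d$, let $\boldsymbol{\Sigma}_1$ be a $d\times d$ covariance matrix, and let ${\boldsymbol{\mu}}_{\min}\le{\boldsymbol{\mu}}_{\max}$ be vectors in $\mathbb{R}^d$. Consider $$\max_{{\boldsymbol{\mu}}_1}\ \mathbb{E}_{{\mathbf{x}}\sim N({\boldsymbol{\mu}}_1,\boldsymbol{\Sigma}_1)}\big[-\log\big(\sigma({\mathbf{w}}^T{\mathbf{x}})\big)\big]\quad\text{s.t.}\quad {\boldsymbol{\mu}}_{\min}\le{\boldsymbol{\mu}}_1\le{\boldsymbol{\mu}}_{\max}.$$ Then an optimal solution ${\boldsymbol{\mu}}_1^*$ has the form ${\boldsymbol{\mu}}_1^*[i]={\boldsymbol{\mu}}_{\max}[i]$ if ${\mathbf{w}}[i]\le0$ and ${\boldsymbol{\mu}}_1^*[i]={\boldsymbol{\mu}}_{\min}[i]$ if ${\mathbf{w}}[i]>0$, for each $i=1,\dots,d$.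
   Context: $\sigma(t)=1/(1+e^{-t})$ is the logistic sigmoid; ${\mathbf{a}}[i]$ denotes the $i$-th entry of a vector ${\mathbf{a}}$; vector inequalities are entrywise. *)

(* Defs.v *)
From HB Require Import structures.
From mathcomp Require Import all_boot all_order all_algebra.
From mathcomp Require Import all_classical all_reals all_analysis.
Set Implicit Arguments. Unset Strict Implicit. Unset Printing Implicit Defensive.
Import Order.TTheory GRing.Theory Num.Theory.
Local Open Scope classical_set_scope.
Local Open Scope ring_scope.

Definition sigmoid {R : realType} (t : R) : R := 1 / (1 + expR (- t)).

Definition lincomb {R : realType} {n : nat} {T : Type}
  (a : 'rV[R]_n) (X : 'I_n -> T -> R) (w : T) : R :=
  \sum_(i < n) a ord0 i * X i w.

Definition normal_law {R : realType} (m v : R) : set R -> \bar R :=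
  if v == 0 then \d_m else normal_prob m (Num.sqrt v).

(* X is a multivariate normal random vector N(mu, Sigma) on (T, P):
   its coordinates are measurable and every linear combination a^T X
   has law N(a^T mu, a^T Sigma a) (standard definition of the
   multivariate Gaussian). *)
Definition is_gaussian_vector {R : realType} {n : nat} {d : measure_display}
  {T : measurableType d} (P : probability T R) (X : 'I_n -> T -> R)
  (mu : 'rV[R]_n) (Sigma : 'M[R]_n) : Prop :=
  (forall i, measurable_fun setT (X i)) /\
  forall a : 'rV[R]_n, forall A : set R, measurable A ->
    P (lincomb a X @^-1` A) =
    normal_law ((a *m mu^T) ord0 ord0) ((a *m Sigma *m a^T) ord0 ord0) A.

Definition covariance_matrix {R : realType} {n : nat} (S : 'M[R]_n) : Prop :=
  S^T = S /\ forall a : 'rV[R]_n, 0 <= (a *m S *m a^T) ord0 ord0.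

Definition logistic_loss_exp {R : realType} {n : nat} {d : measure_display}
  {T : measurableType d} (P : probability T R) (X : 'I_n -> T -> R)
  (w : 'rV[R]_n) : \bar R :=
  'E_P[fun t => - ln (sigmoid (lincomb w X t))].

Definition mu_star {R : realType} {n : nat} (w mu_min mu_max : 'rV[R]_n) : 'rV[R]_n :=
  \row_i (if w ord0 i <= 0 then mu_max ord0 i else mu_min ord0 i).

(* Main.v *)
Require Import Defs.
From HB Require Import structures.
From mathcomp Require Import all_boot all_order all_algebra.
From mathcomp Require Import all_classical all_reals all_analysis.
From mathcomp Require Import measurable_realfun.
Import Order.TTheory GRing.Theory Num.Theory.
Local Open Scope classical_set_scope.
Local Open Scope ring_scope.
Import HBNNSimple.
Import numFieldNormedType.Exports.

Lemma mEFin d (T : measurableType d) (R : realType) (D : set T) (g : T -> R) :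
  measurable_fun D g -> measurable_fun D (fun x => (g x)%:E).
Proof. by move=> mg; apply/measurable_EFinP. Qed.

Section dens.
Local Open Scope ereal_scope.
Context d (T : measurableType d) (R : realType).
Variables (mu nu : {measure set T -> \bar R}) (p : T -> R).
Hypotheses (mp : measurable_fun setT p) (p0 : forall x, (0 <= p x)%R)
  (hnu : forall A, measurable A -> nu A = \int[mu]_(x in A) (p x)%:E).

Let dens_indic E : measurable E ->
  \int[nu]_x (\1_E x)%:E = \int[mu]_x ((\1_E x)%:E * (p x)%:E).
Proof.
move=> mE; rewrite integral_indic//= setIT hnu// integral_mkcond.
apply: eq_integral => x _; rewrite patchE indicE; case: ifPn => xE.
  by rewrite mul1e.
by rewrite mul0e.
Qed.

Let dens_nnsfun (f : {nnsfun T >-> R}) :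
  \int[nu]_x (f x)%:E = \int[mu]_x ((f x)%:E * (p x)%:E).
Proof.
under [LHS]eq_integral do rewrite fimfunE -fsumEFin//.
rewrite [LHS]ge0_integral_fsum//; last 2 first.
  - by move=> r; exact/measurable_EFinP/measurableT_comp.
  - by move=> n x _; rewrite EFinM nnfun_muleindic_ge0.
under [RHS]eq_integral.
  move=> x xD; rewrite fimfunE -fsumEFin// ge0_mule_fsuml; last first.
    by move=> r; rewrite EFinM nnfun_muleindic_ge0.
  over.
rewrite [RHS]ge0_integral_fsum//; last 2 first.
  - move=> r; apply/measurable_EFinP; apply: measurable_funM => //.
    exact/measurableT_comp.
  - move=> n x _; rewrite EFinM mule_ge0//; first by rewrite nnfun_muleindic_ge0.
    by rewrite lee_fin.
apply: eq_fsbigr => r /set_mem [t _ ft].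
have r0 : (0 <= r)%R by rewrite -ft; exact: fun_ge0.
under [LHS]eq_integral do rewrite EFinM.
rewrite ge0_integralZl//; last first.
  apply: mEFin; apply: measurable_indic.
  by rewrite -[X in measurable X]setTI; exact: measurable_funP.
under [RHS]eq_integral do rewrite EFinM -muleA.
rewrite ge0_integralZl//; first by rewrite dens_indic.
  rewrite (_ : (fun x => _) = (fun x => ((\1_(f @^-1` [set r]) x * p x)%:E))); last first.
    by apply/funext => x; rewrite EFinM.
  apply: mEFin; apply: measurable_funM => //; apply: measurable_indic.
by move=> x _; rewrite mule_ge0// lee_fin.
Qed.

Lemma ge0_integral_density (f : T -> \bar R) :
  measurable_fun setT f -> (forall x, 0 <= f x) ->
  \int[nu]_x f x = \int[mu]_x (f x * (p x)%:E).
Proof.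
move=> mf f0.
pose f_ := nnsfun_approx measurableT mf.
transitivity (lim (\int[nu]_x (f_ n x)%:E @[n --> \oo])).
  rewrite -monotone_convergence//=.
  - apply: eq_integral => ? /[!inE] xD; apply/esym/cvg_lim => //=.
    exact: cvg_nnsfun_approx.
  - by move=> n; exact/measurable_EFinP/measurable_funTS.
  - by move=> n ? _; rewrite lee_fin.
  - by move=> ? _ ? ? mn; rewrite lee_fin; exact/lefP/nd_nnsfun_approx.
transitivity (lim (\int[mu]_x ((f_ n x)%:E * (p x)%:E) @[n --> \oo])).
  by apply: congr_lim; apply/funext => n; exact: dens_nnsfun.
rewrite -monotone_convergence//=.
- apply: eq_integral => x _.
  apply/cvg_lim => //; apply: cvgeZr => //; exact: cvg_nnsfun_approx.
- move=> n; apply: emeasurable_funM; apply: mEFin => //.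
- by move=> n x _; rewrite mule_ge0// lee_fin.
- move=> x _ a b ab; rewrite lee_wpmul2r ?lee_fin//.
  exact/lefP/nd_nnsfun_approx.
Qed.
End dens.

Section gfun.
Context {R : realType}.
Definition gl (t : R) : R := - ln (1 / (1 + expR (- t))).

Lemma glE t : gl t = ln (1 + expR (- t)).
Proof.
by rewrite /gl div1r lnV ?opprK// posrE addr_gt0// ?ltr01 ?expR_gt0.
Qed.

Lemma gl_ge0 t : 0 <= gl t.
Proof. by rewrite glE ln_ge0// lerDl expR_ge0. Qed.

Lemma gl_anti s t : s <= t -> gl t <= gl s.
Proof.
move=> st; rewrite !glE ler_ln ?posrE ?addr_gt0 ?ltr01 ?expR_gt0//.
by rewrite lerD2l ler_expR lerN2.
Qed.

Lemma gl_cont : continuous gl.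
Proof.
have -> : gl = (@ln R) \o (fun t => 1 + expR (- t)).
  by apply/funext => t; rewrite glE.
move=> x; apply: continuous_comp; last first.
  by apply: continuous_ln; rewrite addr_gt0 ?ltr01 ?expR_gt0.
apply: continuousD; first exact: cst_continuous.
apply: (@continuous_comp _ _ _ (fun t : R => - t) expR).
  exact: opp_continuous.
exact: continuous_expR.
Qed.

Lemma gl_meas : measurable_fun setT gl.
Proof. exact: continuous_measurable_fun gl_cont. Qed.
End gfun.

Section shift.
Context {R : realType}.
Local Notation mu := (@lebesgue_measure R).

Lemma normal_pdf_shift (m s y : R) : s != 0 ->
  normal_pdf m s (y + m) = normal_pdf 0 s y.
Proof.
move=> s0; rewrite /normal_pdf (negbTE s0) normal_fun_center.
rewrite [in RHS]normal_fun_center /=. by rewrite addrK subr0.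
Qed.

Lemma shift_integral (m s : R) : s != 0 ->
  (\int[mu]_x ((gl x)%:E * (normal_pdf m s x)%:E) =
  \int[mu]_y ((gl (y + m) * normal_pdf 0 s y)%:E))%E.
Proof.
move=> s0.
transitivity (\int[mu]_x ((gl x * normal_pdf m s x)%:E))%E.
  by apply: eq_integral => x _; rewrite EFinM.
have F'E : (fun y : R => y + m)^`()%classic = cst 1.
  apply/funext => x; rewrite derive1E deriveD// derive_id derive_cst addr0.
  by [].
rewrite (@increasing_ge0_integration_by_substitutionT R (fun y => y + m)); last first.
- by move=> x; rewrite mulr_ge0 ?gl_ge0 ?normal_pdf_ge0.
- move=> x; apply: continuousM; first exact: gl_cont.
  exact: continuous_normal_pdf.
- exact: cvg_addrr.
- exact: cvg_addrr_Ny.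
- move=> x; apply: derivableD => //.
- by rewrite F'E; exact: is_cvg_cst.
- by rewrite F'E; exact: is_cvg_cst.
- by rewrite F'E => ?; exact: cvg_cst.
- by move=> x y xy; rewrite ltrD2r.
by apply: eq_integral => y _; rewrite F'E !fctE mulr1 normal_pdf_shift//.
Qed.
End shift.

Section law.
Local Open Scope ereal_scope.

Lemma law_loss (R : realType) (n : nat) (w : 'rV[R]_n) (Sigma : 'M[R]_n)
  d (T : measurableType d) (P : probability T R) (X : 'I_n -> T -> R) (mu : 'rV[R]_n) :
  is_gaussian_vector P X mu Sigma ->
  (0 <= (w *m Sigma *m w^T) ord0 ord0)%R ->
  logistic_loss_exp P X w =
  if (w *m Sigma *m w^T) ord0 ord0 == 0%R then (gl ((w *m mu^T) ord0 ord0))%:E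
  else \int[lebesgue_measure]_y ((gl (y + (w *m mu^T) ord0 ord0) *
         normal_pdf 0 (Num.sqrt ((w *m Sigma *m w^T) ord0 ord0)) y)%:E).
Proof.
move=> [mX hX] v0.
set m := (w *m mu^T) ord0 ord0.
set v := (w *m Sigma *m w^T) ord0 ord0.
have mY : measurable_fun setT (lincomb w X).
  rewrite /lincomb; apply: measurable_sum => i; apply: measurable_funM => //.
pose Y : T -> measurableTypeR R := lincomb w X.
have mY' : measurable_fun setT Y := mY.
have E : logistic_loss_exp P X w =
    \int[pushforward P Y]_y (gl y)%:E.
  rewrite /logistic_loss_exp unlock (ge0_integral_pushforward mY') //=.
  - apply: mEFin; exact: gl_meas.
  - by move=> y _; rewrite lee_fin gl_ge0.
rewrite E.
have hlaw : forall A, measurable A -> pushforward P Y A = normal_law m v A.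
  by move=> A mA; exact: hX.
rewrite /normal_law in hlaw.
case: ifP => vz in hlaw *.
- rewrite (eq_measure_integral (@dirac _ (measurableTypeR R) m R)); last by move=> A mA _; exact: hlaw.
  rewrite integral_dirac; last by apply: mEFin; exact: gl_meas.
  by rewrite diracT mul1e.
  exact: measurableT.
- rewrite (eq_measure_integral (normal_prob m (Num.sqrt v))); last first.
    by move=> A mA _; exact: hlaw.
  rewrite (@ge0_integral_density _ _ _ lebesgue_measure (normal_prob m (Num.sqrt v))
     (normal_pdf m (Num.sqrt v))).
  + rewrite shift_integral//.
    by rewrite sqrtr_eq0 -ltNge lt_neqAle eq_sym vz v0.
  + exact: measurable_normal_pdf.
  + by move=> x; exact: normal_pdf_ge0.
  + by [].
  + apply: mEFin; exact: gl_meas.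
  + by move=> x; rewrite lee_fin gl_ge0.
Qed.
End law.

Theorem theorem5 (R : realType) (n : nat) (w : 'rV[R]_n) (Sigma : 'M[R]_n)
  (mu_min mu_max : 'rV[R]_n) :
  covariance_matrix Sigma ->
  (forall i, mu_min ord0 i <= mu_max ord0 i) ->
  (forall i, mu_min ord0 i <= mu_star w mu_min mu_max ord0 i <= mu_max ord0 i) /\
  forall (mu1 : 'rV[R]_n),
    (forall i, mu_min ord0 i <= mu1 ord0 i <= mu_max ord0 i) ->
  forall (d1 : measure_display) (T1 : measurableType d1) (P1 : probability T1 R)
    (X1 : 'I_n -> T1 -> R),
    is_gaussian_vector P1 X1 mu1 Sigma ->
  forall (d2 : measure_display) (T2 : measurableType d2) (P2 : probability T2 R)
    (X2 : 'I_n -> T2 -> R),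
    is_gaussian_vector P2 X2 (mu_star w mu_min mu_max) Sigma ->
    (logistic_loss_exp P1 X1 w <= logistic_loss_exp P2 X2 w)%E.
Proof.
move=> [_ cov] hle; split.
  by move=> i; rewrite mxE; case: ifP => _; rewrite lexx hle.
move=> mu1 hmu1 d1 T1 P1 X1 G1 d2 T2 P2 X2 G2.
have v0 := cov w.
rewrite (@law_loss _ _ w Sigma _ _ P1 X1 mu1 G1 v0) (@law_loss _ _ w Sigma _ _ P2 X2 _ G2 v0).
have mle : (w *m (mu_star w mu_min mu_max)^T) ord0 ord0 <= (w *m mu1^T) ord0 ord0.
  rewrite !mxE; apply: ler_sum => j _; rewrite !mxE.
  have /andP[h1 h2] := hmu1 j.
  case: ifP => wj.
    exact: ler_wnM2l.
  by apply: ler_wpM2l => //; rewrite ltW // ltNge wj.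
set m1 := (w *m mu1^T) ord0 ord0 in mle *.
set m2 := (w *m (mu_star w mu_min mu_max)^T) ord0 ord0 in mle *.
set v := (w *m Sigma *m w^T) ord0 ord0.
case: (v == 0%R).
  rewrite lee_fin; apply: gl_anti; exact: mle.
apply: ge0_le_integral.
- exact: measurableT.
- by move=> y _; rewrite lee_fin mulr_ge0 ?gl_ge0 ?normal_pdf_ge0.
- apply: mEFin; apply: measurable_funM; last exact: measurable_normal_pdf.
  apply: measurableT_comp; first exact: gl_meas.
  by apply: measurable_funD.
- apply: mEFin; apply: measurable_funM; last exact: measurable_normal_pdf.
  apply: measurableT_comp; first exact: gl_meas.
  by apply: measurable_funD.
- move=> y _; rewrite lee_fin ler_wpM2r ?normal_pdf_ge0//.
  by apply: gl_anti; rewrite lerD2l.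
Qed.
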